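(* Let $A\in\mathbb R^{n\times n}$ be symmetric with bandwidth $b$, where $1<b<n$, let $Q\in\mathbb R^{2n\times 2n}$ be the orthogonal matrix produced by Algorithm 2 (described in the context) applied to $A$, and set $Q_1=Q(1{:}n,1{:}n)$, $Q_2=Q(n{+}1{:}2n,1{:}n)$. Then for every $1\le k<n$, both $(Q_1Q_2^{T})(1{:}k,\,k{+}1{:}n)$ and $(Q_1Q_2^{T})(k{+}1{:}n,\,1{:}k)$ have rank at most $2b$.
   Context: A matrix has bandwidth $b$ if its $(i,j)$ entry vanishes whenever $|i-j|>b$. A Givens rotation on rows $p\ne q$ is an orthogonal matrix $G\in\mathbb R^{2n\times 2n}$ equal to the identity except in the entries $(p,p),(p,q),(q,p),(q,q)$, which form a $2\times2$ rotation $\begin{bmatrix}c&s\\-s&c\end{bmatrix}$, $c^2+s^2=1$. ''Rotate rows $p,q$ to annihilate $R(q,j)$'' means: choose such a $G$ for which $(G^{T}R)(q,j)=0$ and then update $R\leftarrow G^{T}R$, $Q\leftarrow QG$. Algorithm 2: Initialize $Q=I_{2n}$, $R=\begin{bmatrix}A\\ I_n\end{bmatrix}\in\mathbb R^{2n\times n}$. First rotate rows $1,n+1$ to annihilate $R(n+1,1)$; then for $j=2,\dots,\min\{n,b+1\}$ rotate rows $1,j$ to annihilate $R(j,1)$. Then for $i=2,\dots,n$: (a) rotate rows $n+1,n+i$ to annihilate $R(n+i,i)$; (b) for $j=i+1,\dots,\min\{n,b+i-1\}$, rotate rows $n+j,n+i$ to annihilate $R(n+i,j)$; (c) rotate rows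 $i,n+1$ to annihilate $R(n+1,i)$; (d) if $i<n$, for $j=i+1,\dots,\min\{n,b+i\}$ rotate rows $i,j$ to annihilate $R(j,i)$. On output $QR=\begin{bmatrix}A\\ I\end{bmatrix}$ with $R$ upper triangular. Notation $M(a{:}b,c{:}d)$ denotes the submatrix with rows $a,\dots,b$ and columns $c,\dots,d$. *)

(* Defs.v *)
From HB Require Import structures.
From mathcomp Require Import all_boot all_order all_algebra.
Set Implicit Arguments. Unset Strict Implicit. Unset Printing Implicit Defensive.
Import Order.TTheory GRing.Theory Num.Theory.
Local Open Scope ring_scope.

(* Entry of a matrix addressed by 0-based natural indices (0 if out of range). *)
Definition mxe (F : nmodType) (m n : nat) (M : 'M[F]_(m, n)) (i j : nat) : F :=
  match @insub _ (fun k => k < m)%N _ i, @insub _ (fun k => k < n)%N _ j with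
  | Some i', Some j' => M i' j'
  | _, _ => 0
  end.

(* The paper's submatrix M(a:b, c:d), with 1-based inclusive indices. *)
Definition subblock (F : nmodType) (m n : nat) (M : 'M[F]_(m, n)) (a b c d : nat)
  : 'M[F]_(b - a + 1, d - c + 1) :=
  \matrix_(i < b - a + 1, j < d - c + 1) mxe M (a - 1 + i) (c - 1 + j).

Definition has_bandwidth (F : nmodType) (n : nat) (b : nat) (A : 'M[F]_n) : Prop :=
  forall i j : 'I_n, (i + b < j)%N || (j + b < i)%N -> A i j = 0.

Definition givens (F : pzRingType) (N : nat) (p q : nat) (c s : F) : 'M[F]_N :=
  \matrix_(i < N, j < N)
    if (i == p.-1 :> nat) && (j == p.-1 :> nat) then c
    else if (i == p.-1 :> nat) && (j == q.-1 :> nat) then s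
    else if (i == q.-1 :> nat) && (j == p.-1 :> nat) then - s
    else if (i == q.-1 :> nat) && (j == q.-1 :> nat) then c
    else (i == j)%:R.

(* "Rotate rows p, q to annihilate R(q, col)" (1-based indices):
   choose a Givens rotation G on rows p <> q with (G^T R)(q, col) = 0,
   then R <- G^T R and Q <- Q G. *)
Definition givens_step (F : pzRingType) (N n : nat) (p q col : nat)
    (Q : 'M[F]_N) (R : 'M[F]_(N, n)) (Q' : 'M[F]_N) (R' : 'M[F]_(N, n)) : Prop :=
  [/\ (0 < p <= N)%N, (0 < q <= N)%N, (0 < col <= n)%N, p != q &
  exists c s : F, [/\ c ^+ 2 + s ^+ 2 = 1,
    mxe ((givens N p q c s)^T *m R) q.-1 col.-1 = 0,
    R' = (givens N p q c s)^T *m R &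
    Q' = Q *m givens N p q c s]].

Fixpoint givens_run (F : pzRingType) (N n : nat) (steps : seq (nat * nat * nat))
    (Q : 'M[F]_N) (R : 'M[F]_(N, n)) (Q' : 'M[F]_N) (R' : 'M[F]_(N, n)) : Prop :=
  match steps with
  | [::] => Q' = Q /\ R' = R
  | (p, q, col) :: st =>
      exists (Qm : 'M[F]_N) (Rm : 'M[F]_(N, n)),
        givens_step p q col Q R Qm Rm /\ givens_run st Qm Rm Q' R'
  end.

(* The sequence of rotations of Algorithm 2 (1-based indices). *)
Definition algo2_stage (n b i : nat) : seq (nat * nat * nat) :=
  [:: (n + 1, n + i, i)]%N
  ++ [seq (n + j, n + i, j)%N | j <- iota i.+1 (minn n (b + i - 1) - i)]
  ++ [:: (i, n + 1, i)]%N
  ++ (if (i < n)%N then [seq (i, j, i) | j <- iota i.+1 (minn n (b + i) - i)]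
      else [::]).

Definition algo2_steps (n b : nat) : seq (nat * nat * nat) :=
  [:: (1, n + 1, 1)]%N
  ++ [seq (1, j, 1)%N | j <- iota 2 (minn n b.+1 - 1)]
  ++ flatten [seq algo2_stage n b i | i <- iota 2 (n - 1)].

Definition algo2_output (F : pzRingType) (n b : nat) (A : 'M[F]_n)
    (Q : 'M[F]_(n + n)) (R : 'M[F]_(n + n, n)) : Prop :=
  givens_run (algo2_steps n b) 1%:M (col_mx A 1%:M) Q R.

(* Main.v *)
Require Import Defs.
From HB Require Import structures.
From mathcomp Require Import all_boot all_order all_algebra.
From mathcomp Require Import zify ring.
Set Implicit Arguments. Unset Strict Implicit. Unset Printing Implicit Defensive.
Import Order.TTheory GRing.Theory Num.Theory.
Local Open Scope ring_scope.

Lemma mxe_ord (F : nmodType) m n (M : 'M[F]_(m,n)) (i : 'I_m) (j : 'I_n) :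
  mxe M i j = M i j.
Proof. by rewrite /mxe !valK. Qed.

Lemma mxe_out (F : nmodType) m n (M : 'M[F]_(m,n)) r c :
  (m <= r)%N || (n <= c)%N -> mxe M r c = 0.
Proof.
rewrite /mxe; case/orP=> H.
  by rewrite insubF // ltnNge H.
case: insub => // i; by rewrite insubF // ltnNge H.
Qed.

Section Giv.
Variable F : comUnitRingType.

Lemma sum_two N (P Qq : 'I_N) (h : 'I_N -> F) : P != Qq ->
  \sum_l h l = h P + h Qq + \sum_(l | (l != P) && (l != Qq)) h l.
Proof.
move=> nPQ; rewrite (bigD1 P) //= (bigD1 Qq) /=; last by rewrite eq_sym.
rewrite addrA; congr (_ + _); apply: eq_bigl => l; by rewrite andbC.
Qed.

Lemma sum_rest N (P Qq r : 'I_N) (h : 'I_N -> F) :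
  \sum_(l | (l != P) && (l != Qq)) (l == r)%:R * h l =
  if (r != P) && (r != Qq) then h r else 0.
Proof.
case: ifP => Hr.
  rewrite (bigD1 r) //= eqxx mul1r big1 ?addr0 // => l /andP[_ /negbTE ->].
  by rewrite mul0r.
rewrite big1 // => l /andP[Hl Hl2]; case: (eqVneq l r) => [El|Nl].
  by subst; rewrite Hl Hl2 in Hr.
by rewrite mul0r.
Qed.

Lemma givensT_mul N n p q (c s : F) (R : 'M[F]_(N, n)) (r : 'I_N) (j : 'I_n)
  (hp : (p.-1 < N)%N) (hq : (q.-1 < N)%N) :
  p.-1 != q.-1 ->
  ((givens N p q c s)^T *m R) r j =
  if (r == p.-1 :> nat) then c * R (Ordinal hp) j - s * R (Ordinal hq) j
  else if (r == q.-1 :> nat) then s * R (Ordinal hp) j + c * R (Ordinal hq) j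
  else R r j.
Proof.
move=> npq.
have nPQ : Ordinal hp != Ordinal hq by [].
rewrite mxE (sum_two _ nPQ).
under eq_bigr => l /andP[lP lQ].
  rewrite !mxE.
  have -> : (l == p.-1 :> nat) = false by apply/negbTE.
  have -> : (l == q.-1 :> nat) = false by apply/negbTE.
  rewrite /=.
  over.
rewrite /= sum_rest !mxE /=.
have e1 : (q.-1 == p.-1) = false by rewrite eq_sym; apply/negbTE.
have e3 : (Ordinal hp == r) = (r == p.-1 :> nat) by rewrite eq_sym.
have e4 : (Ordinal hq == r) = (r == q.-1 :> nat) by rewrite eq_sym.
have e5 : (r != Ordinal hp) = (r != p.-1 :> nat) by [].
have e6 : (r != Ordinal hq) = (r != q.-1 :> nat) by [].
rewrite !eqxx (negbTE npq) e1 e3 e4 e5 e6 /=.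
case: (eqVneq (r : nat) p.-1) => [Ep|Np] /=.
  by rewrite addr0 mulNr.
case: (eqVneq (r : nat) q.-1) => [Eq|Nq] /=.
  by rewrite addr0.
by rewrite !mul0r !add0r.
Qed.

End Giv.

Lemma givens_orth (F : comUnitRingType) N p q (c s : F) :
  (0 < p <= N)%N -> (0 < q <= N)%N -> p != q -> c ^+ 2 + s ^+ 2 = 1 ->
  (givens N p q c s)^T *m givens N p q c s = 1%:M.
Proof.
move=> Hp Hq npq cs.
have hp : (p.-1 < N)%N by lia.
have hq : (q.-1 < N)%N by lia.
have nPQ : p.-1 != q.-1 by lia.
have e1 : (q.-1 == p.-1) = false by rewrite eq_sym; apply/negbTE.
apply/matrixP => r j; rewrite (givensT_mul _ _ _ _ _ hp hq) // !mxE /=.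
have e3 : forall j : 'I_N, (Ordinal hp == j) = ((j:nat) == p.-1) by move=> j'; rewrite eq_sym.
have e4 : forall j : 'I_N, (Ordinal hq == j) = ((j:nat) == q.-1) by move=> j'; rewrite eq_sym.
have rj : (r == j) = ((r:nat) == j) by [].
rewrite !eqxx (negbTE nPQ) e1 /= !e3 !e4 rj.
case: (eqVneq (r:nat) p.-1) => Ep; case: (eqVneq (r:nat) q.-1) => Eq;
case: (eqVneq (j:nat) p.-1) => Ej; case: (eqVneq (j:nat) q.-1) => Ejq;
case: (eqVneq (r:nat) j) => Erj; rewrite /= ?mulr1n ?mulr0n; try lia;
first [ rewrite -cs; ring | ring ].
Qed.


Lemma mxe_in (F : nmodType) m n (M : 'M[F]_(m,n)) r c (hr : (r < m)%N) (hc : (c < n)%N) :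
  mxe M r c = M (Ordinal hr) (Ordinal hc).
Proof. exact: (mxe_ord M (Ordinal hr) (Ordinal hc)). Qed.

Section Step.
Variable F : comUnitRingType.

Lemma step_facts N n p q col (Q Q' : 'M[F]_N) (R R' : 'M[F]_(N,n)) :
  givens_step p q col Q R Q' R' ->
  [/\ Q' *m R' = Q *m R,
      Q^T *m Q = 1%:M -> Q'^T *m Q' = 1%:M,
      (forall r c, r != p.-1 -> r != q.-1 -> mxe R' r c = mxe R r c),
      (forall c, mxe R p.-1 c = 0 -> mxe R q.-1 c = 0 ->
          mxe R' p.-1 c = 0 /\ mxe R' q.-1 c = 0) &
      mxe R' q.-1 col.-1 = 0].
Proof.
case=> Hp Hq Hcol npq [c [s [cs Hz ER EQ]]].
have GG := givens_orth Hp Hq npq cs.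
have GG' := mulmx1C GG.
have hp : (p.-1 < N)%N by lia.
have hq : (q.-1 < N)%N by lia.
have nPQ : p.-1 != q.-1 by lia.
split.
- by rewrite ER EQ -mulmxA (mulmxA (givens N p q c s)) GG' mul1mx.
- move=> QQ; rewrite EQ trmx_mul -mulmxA (mulmxA Q^T) QQ mul1mx; exact: GG.
- move=> r c0 Hr1 Hr2; case: (ltnP r N) => hr; last by rewrite !mxe_out ?hr.
  case: (ltnP c0 n) => hc; last by rewrite !mxe_out ?hc ?orbT.
  rewrite ER !(mxe_in _ hr hc) (givensT_mul _ _ _ _ _ hp hq) //=.
  by rewrite (negbTE Hr1) (negbTE Hr2).
- move=> c0; case: (ltnP c0 n) => hc; last by rewrite !mxe_out ?hc ?orbT.
  rewrite !(mxe_in _ hp hc) !(mxe_in _ hq hc) ER => H1 H2.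
  rewrite !(givensT_mul _ _ _ _ _ hp hq) //= eqxx.
  rewrite H1 H2 !mulr0 subr0 addr0; split => //; by do 2?case: ifP => _.
- by rewrite ER.
Qed.

Definition resp N n (R : 'M[F]_(N,n)) (P : nat -> nat -> bool) :=
  forall r c, ~~ P r c -> mxe R r c = 0.

Lemma step_resp N n p q col (Q Q' : 'M[F]_N) (R R' : 'M[F]_(N,n)) P1 P2 :
  givens_step p q col Q R Q' R' -> resp R P1 ->
  (forall r c, ~~ P2 r c ->
     [|| (r != p.-1) && (r != q.-1) && ~~ P1 r c,
         ((r == p.-1) || (r == q.-1)) && ~~ P1 p.-1 c && ~~ P1 q.-1 c |
         (r == q.-1) && (c == col.-1)]) ->
  resp R' P2.
Proof.
move=> /step_facts[_ _ H3 H4 H5] HR HP r c /HP.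
case/or3P.
- by case/andP=> /andP[a b] d; rewrite H3 // HR.
- case/andP=> /andP[/orP[]/eqP-> a] b; have [] := H4 c (HR _ _ a) (HR _ _ b) => //.
- by case/andP=> /eqP-> /eqP->.
Qed.

Lemma resp_mono N n (R : 'M[F]_(N,n)) (P1 P2 : nat -> nat -> bool) :
  resp R P1 -> (forall r c, (c < n)%N -> ~~ P2 r c -> ~~ P1 r c) -> resp R P2.
Proof.
move=> HR H r c Hc; case: (ltnP c n) => hc; first by apply: HR; apply: H.
by rewrite mxe_out // hc orbT.
Qed.

Lemma run_cat N n s1 s2 (Q Q' : 'M[F]_N) (R R' : 'M[F]_(N,n)) :
  givens_run (s1 ++ s2) Q R Q' R' ->
  exists Qm Rm, givens_run s1 Q R Qm Rm /\ givens_run s2 Qm Rm Q' R'.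
Proof.
elim: s1 Q R => [|[[p q] col] s1 IH] Q R /=.
  by move=> H; exists Q, R.
case=> Qm [Rm [Hs /IH [Q2 [R2 [H1 H2]]]]].
by exists Q2, R2; split => //; exists Qm, Rm.
Qed.

Lemma run_facts N n st (Q Q' : 'M[F]_N) (R R' : 'M[F]_(N,n)) :
  givens_run st Q R Q' R' ->
  Q' *m R' = Q *m R /\ (Q^T *m Q = 1%:M -> Q'^T *m Q' = 1%:M).
Proof.
elim: st Q R => [|[[p q] col] st IH] Q R /=.
  by case=> -> ->.
case=> Qm [Rm [/step_facts[E1 O1 _ _ _] /IH [E2 O2]]].
by split; [rewrite E2 E1 | move=> /O1 /O2].
Qed.

Lemma run_loop N n (f : nat -> nat * nat * nat) (Inv : nat -> 'M[F]_(N,n) -> Prop) s len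
  (Q Q' : 'M[F]_N) (R R' : 'M[F]_(N,n)) :
  (forall j, (s <= j < s + len)%N -> forall Q R Q' R',
      Inv j R -> givens_step (f j).1.1 (f j).1.2 (f j).2 Q R Q' R' -> Inv j.+1 R') ->
  Inv s R -> givens_run [seq f j | j <- iota s len] Q R Q' R' -> Inv (s + len)%N R'.
Proof.
elim: len s Q R => [|len IH] s Q R Hst HI /=.
  by case=> _ ->; rewrite addn0.
case E: (f s) => [[p q] col].
case=> Qm [Rm [Hs Hr]].
rewrite -addSnnS; apply: (IH s.+1 Qm Rm) => //.
  move=> j Hj; apply: Hst; lia.
apply: (Hst s _ Q R Qm) => //; first lia.
by rewrite E.
Qed.

Lemma run_loopF N n (f : nat -> seq (nat * nat * nat)) (Inv : nat -> 'M[F]_(N,n) -> Prop) s len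
  (Q Q' : 'M[F]_N) (R R' : 'M[F]_(N,n)) :
  (forall j, (s <= j < s + len)%N -> forall Q R Q' R',
      Inv j R -> givens_run (f j) Q R Q' R' -> Inv j.+1 R') ->
  Inv s R -> givens_run (flatten [seq f j | j <- iota s len]) Q R Q' R' -> Inv (s + len)%N R'.
Proof.
elim: len s Q R => [|len IH] s Q R Hst HI /=.
  by case=> _ ->; rewrite addn0.
case/run_cat=> Qm [Rm [Hs Hr]].
rewrite -addSnnS; apply: (IH s.+1 Qm Rm) => //.
  move=> j Hj; apply: Hst; lia.
apply: (Hst s _ Q R Qm) => //; lia.
Qed.

End Step.

Section Pat.
Variable F : comUnitRingType.
Variables n b : nat.

Definition pat (T : nat -> nat -> bool) (Nr : nat -> bool) (B : nat -> nat -> bool)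
  (r c : nat) : bool :=
  if (r < n)%N then T r c else if r == n then Nr c else B (r - n)%N c.

Lemma pat_top T Nr B r c : (r < n)%N -> pat T Nr B r c = T r c.
Proof. by rewrite /pat => ->. Qed.
Lemma pat_n T Nr B c : pat T Nr B n c = Nr c.
Proof. by rewrite /pat ltnn eqxx. Qed.
Lemma pat_bot T Nr B r c : (n < r)%N -> pat T Nr B r c = B (r - n)%N c.
Proof. by rewrite /pat => H; rewrite ltnNge ltnW //= gtn_eqF. Qed.

Lemma step_pat N p q col P Qq C (Q Q' : 'M[F]_N) (R R' : 'M[F]_(N,n)) P1 P2 :
  P = p.-1 -> Qq = q.-1 -> C = col.-1 ->
  givens_step p q col Q R Q' R' -> resp R P1 ->
  (forall r c, r != P -> r != Qq -> ~~ P2 r c -> ~~ P1 r c) ->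
  (forall c, ~~ P2 P c -> ~~ P1 P c && ~~ P1 Qq c) ->
  (forall c, ~~ P2 Qq c -> c != C -> ~~ P1 P c && ~~ P1 Qq c) ->
  resp R' P2.
Proof.
move=> -> -> -> Hs HR H1 H2 H3; apply: (step_resp Hs HR) => r c H.
case: (eqVneq r p.-1) => [E|NP]; first by subst; rewrite /= H2.
case: (eqVneq r q.-1) => [E|NQ] /=; last by rewrite H1.
subst; case: (eqVneq c col.-1) => [->|Nc]; rewrite ?andbT ?orbT //.
by rewrite H3 ?orbT.
Qed.

Definition top t r c : bool := ((r < t) || [&& t <= c, r <= c + b & c <= r + b])%N.

Definition PA t := pat (top t) (fun c => (t <= c) && (c <= t + b - 1))%N
  (fun m c => (t <= m) && (m <= c) && (c <= maxn m (t + b - 2)))%N.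
Definition PC t := pat (top t) (fun c => (t <= c) && (c <= t + b - 1))%N
  (fun m c => (t < m) && (m <= c) && (c <= maxn m (t + b - 1)))%N.
Definition PB t J := pat (top t) (fun c => (t <= c) && (c <= t + b - 1))%N
  (fun m c => [|| (m == t) && (J <= c) && (c <= t + b - 1),
     (t < m) && (m < J) && (m <= c) && (c <= t + b - 1) |
     (J <= m) && (m <= c) && (c <= maxn m (t + b - 2))])%N.
Definition PD t J := pat (fun r c => [|| (r < t),
     (r == t) && (t <= c) && (c <= J + b - 1),
     (t < r) && (r < J) && top t.+1 r c | (J <= r) && top t r c])%N
  (fun c => (t < c) && (c <= t + b))%N
  (fun m c => (t < m) && (m <= c) && (c <= maxn m (t + b - 1)))%N.

Lemma step_a t (Q Q' : 'M[F]_(n + n)) (R R' : 'M[F]_(n + n, n)) :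
  (1 < b)%N -> (1 <= t < n)%N -> resp R (PA t) ->
  givens_step (n + 1) (n + t.+1) t.+1 Q R Q' R' -> resp R' (PB t t.+1).
Proof.
move=> Hb Ht HR Hs.
apply: (step_pat (P := n) (Qq := n + t) (C := t) _ _ _ Hs HR); try lia.
- move=> r c NP NQ; case: (ltngtP r n) => Hr.
  + by rewrite /PA /PB !pat_top.
  + rewrite /PA /PB !pat_bot //; lia.
  + by rewrite Hr eqxx in NP.
- move=> c; rewrite /PA /PB !pat_n !pat_bot; lia.
- move=> c; rewrite /PA /PB !pat_n !pat_bot; lia.
Qed.

Lemma step_b t J (Q Q' : 'M[F]_(n + n)) (R R' : 'M[F]_(n + n, n)) :
  (1 < b)%N -> (1 <= t < n)%N -> (t < J)%N -> (J < n)%N -> (J <= t + b - 1)%N ->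
  resp R (PB t J) ->
  givens_step (n + J.+1) (n + t.+1) J.+1 Q R Q' R' -> resp R' (PB t J.+1).
Proof.
move=> Hb Ht HJ1 HJ2 HJ3 HR Hs.
apply: (step_pat (P := n + J) (Qq := n + t) (C := J) _ _ _ Hs HR); try lia.
- move=> r c NP NQ; case: (ltngtP r n) => Hr.
  + by rewrite /PB !pat_top.
  + rewrite /PB !pat_bot //; lia.
  + by rewrite Hr /PB !pat_n.
- have h1 : (n < n + J)%N by lia.
  have h2 : (n < n + t)%N by lia.
  move=> c; rewrite /PB !(pat_bot _ _ _ _ h1) !(pat_bot _ _ _ _ h2); lia.
- have h1 : (n < n + J)%N by lia.
  have h2 : (n < n + t)%N by lia.
  move=> c; rewrite /PB !(pat_bot _ _ _ _ h1) !(pat_bot _ _ _ _ h2); lia.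
Qed.

Lemma step_c t (Q Q' : 'M[F]_(n + n)) (R R' : 'M[F]_(n + n, n)) :
  (1 < b)%N -> (t < n)%N -> resp R (PC t) ->
  givens_step t.+1 (n + 1) t.+1 Q R Q' R' -> resp R' (PD t t.+1).
Proof.
move=> Hb Ht HR Hs.
apply: (step_pat (P := t) (Qq := n) (C := t) _ _ _ Hs HR); try lia.
- move=> r c NP NQ; case: (ltngtP r n) => Hr.
  + rewrite /PC /PD !pat_top // /top; lia.
  + by rewrite /PC /PD !pat_bot.
  + by rewrite Hr eqxx in NQ.
- move=> c; rewrite /PC /PD !(pat_top _ _ _ _ Ht) pat_n /top; lia.
- move=> c; rewrite /PC /PD !(pat_top _ _ _ _ Ht) !pat_n /top; lia.
Qed.

Lemma step_d t J (Q Q' : 'M[F]_(n + n)) (R R' : 'M[F]_(n + n, n)) :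
  (1 < b)%N -> (t < J)%N -> (J < n)%N -> (J <= t + b)%N -> resp R (PD t J) ->
  givens_step t.+1 J.+1 t.+1 Q R Q' R' -> resp R' (PD t J.+1).
Proof.
move=> Hb HJ1 HJ2 HJ3 HR Hs.
apply: (step_pat (P := t) (Qq := J) (C := t) _ _ _ Hs HR); try lia.
- move=> r c NP NQ; case: (ltngtP r n) => Hr.
  + rewrite /PD !pat_top // /top; lia.
  + by rewrite /PD !pat_bot.
  + by rewrite Hr /PD !pat_n.
- have Ht : (t < n)%N by lia.
  move=> c; rewrite /PD !(pat_top _ _ _ _ Ht) !(pat_top _ _ _ _ HJ2) /top; lia.
- have Ht : (t < n)%N by lia.
  move=> c; rewrite /PD !(pat_top _ _ _ _ Ht) !(pat_top _ _ _ _ HJ2) /top; lia.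
Qed.

Lemma run1 N p q col (Q Q' : 'M[F]_N) (R R' : 'M[F]_(N, n)) :
  givens_run [:: (p, q, col)] Q R Q' R' -> givens_step p q col Q R Q' R'.
Proof. by case=> Qm [Rm [Hs [-> ->]]]. Qed.

Lemma phase_ab t (Q Q' : 'M[F]_(n + n)) (R R' : 'M[F]_(n + n, n)) :
  (1 < b)%N -> (1 <= t < n)%N -> resp R (PA t) ->
  givens_run ([:: (n + 1, n + t.+1, t.+1)]
     ++ [seq (n + j, n + t.+1, j) | j <- iota t.+2 (minn n (b + t.+1 - 1) - t.+1)])%N
     Q R Q' R' -> resp R' (PC t).
Proof.
move=> Hb Ht HR /= [Qm [Rm [Hs Hr]]].
have H1 := step_a Hb Ht HR Hs.
have := run_loop (f := fun j => (n + j, n + t.+1, j)%N)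
   (Inv := fun j R => resp R (PB t j.-1)) (s := t.+2) _ H1 Hr.
move=> H; have {H} H : resp R' (PB t (t.+1 + (minn n (b + t.+1 - 1) - t.+1))).
  apply: H => j Hj Q1 R1 Q2 R2 /= HI.
  have -> : j = j.-1.+1 by lia.
  rewrite -[(n + j.-1.+1)%N]/(n + j.-1.+1)%N.
  apply: step_b => //; lia.
apply: (resp_mono H) => r c Hc; case: (ltngtP r n) => Hrn.
- by rewrite /PB /PC !pat_top.
- rewrite /PB /PC !pat_bot //; lia.
- by rewrite Hrn /PB /PC !pat_n.
Qed.

Lemma phase_cd t (Q Q' : 'M[F]_(n + n)) (R R' : 'M[F]_(n + n, n)) :
  (1 < b)%N -> (t < n)%N -> resp R (PC t) ->
  givens_run ([:: (t.+1, n + 1, t.+1)]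
     ++ [seq (t.+1, j, t.+1) | j <- iota t.+2 (minn n (b + t.+1) - t.+1)])%N
     Q R Q' R' -> resp R' (PA t.+1).
Proof.
move=> Hb Ht HR /= [Qm [Rm [Hs Hr]]].
have H1 := step_c Hb Ht HR Hs.
have := run_loop (f := fun j => (t.+1, j, t.+1)%N)
   (Inv := fun j R => resp R (PD t j.-1)) (s := t.+2) _ H1 Hr.
move=> H; have {H} H : resp R' (PD t (t.+1 + (minn n (b + t.+1) - t.+1))).
  apply: H => j Hj Q1 R1 Q2 R2 /= HI.
  have -> : j = j.-1.+1 by lia.
  apply: step_d => //; lia.
apply: (resp_mono H) => r c Hc; case: (ltngtP r n) => Hrn.
- rewrite /PD /PA !pat_top // /top; lia.
- rewrite /PD /PA !pat_bot //; lia.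
- rewrite Hrn /PD /PA !pat_n; lia.
Qed.

End Pat.

Lemma band_mxe (F : nmodType) n b (A : 'M[F]_n) : has_bandwidth b A ->
  forall r c, ((r + b < c) || (c + b < r))%N -> mxe A r c = 0.
Proof.
move=> HA r c H; case: (ltnP r n) => hr; last by rewrite mxe_out ?hr.
case: (ltnP c n) => hc; last by rewrite mxe_out ?hc ?orbT.
by rewrite (mxe_in _ hr hc) HA.
Qed.

Lemma mxe_colmx (F : nmodType) m1 m2 n (A : 'M[F]_(m1, n)) (B : 'M[F]_(m2, n)) r c :
  mxe (col_mx A B) r c = if (r < m1)%N then mxe A r c else mxe B (r - m1) c.
Proof.
case: (ltnP c n) => hc; last by rewrite !mxe_out ?hc ?orbT //; case: ifP.
case: (ltnP r (m1 + m2)) => hr; last first.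
  rewrite mxe_out ?hr //; case: ifP => h; first lia.
  by rewrite mxe_out //; apply/orP; left; lia.
case: ifP => h.
  rewrite (mxe_in _ hr hc) (mxe_in _ h hc).
  have -> : Ordinal hr = lshift m2 (Ordinal h) by apply: val_inj.
  by rewrite col_mxEu.
have h' : (r - m1 < m2)%N by lia.
rewrite (mxe_in _ hr hc) (mxe_in _ h' hc).
have -> : Ordinal hr = rshift m1 (Ordinal h') by apply: val_inj => /=; lia.
by rewrite col_mxEd.
Qed.

Lemma mxe1 (F : pzRingType) n r c : mxe (1%:M : 'M[F]_n) r c = ((r == c) && (r < n)%N)%:R.
Proof.
case: (ltnP c n) => hc; last first.
  rewrite mxe_out ?hc ?orbT //; case: eqP => //= ->; by rewrite ltnNge hc.
case: (ltnP r n) => hr; last by rewrite mxe_out ?hr // andbF.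
by rewrite (mxe_in _ hr hc) mxE andbT.
Qed.

Section Alg.
Variable F : comUnitRingType.

Lemma algo2_bottom n b (A : 'M[F]_n) (Q : 'M[F]_(n + n)) (R : 'M[F]_(n + n, n)) :
  has_bandwidth b A -> (1 < b)%N -> (b < n)%N -> algo2_output b A Q R ->
  forall r c, (n <= r)%N -> mxe R r c = 0.
Proof.
move=> HA Hb Hbn; rewrite /algo2_output /algo2_steps.
rewrite catA => /run_cat [Q1 [R1 [H1 H2]]].
have I0 : resp (col_mx A 1%:M) (PC n b 0).
  move=> r c; rewrite mxe_colmx /PC /pat.
  case: ifP => hr.
    rewrite /top => H; apply: (band_mxe HA); lia.
  rewrite mxe1; case: ifP => hrn.
    move/eqP: hrn => -> H; rewrite subnn; case: eqP => //= E; lia.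
  move=> H; case: eqP => //= E; lia.
have I1 : resp R1 (PA n b 1).
  move: H1; rewrite -[b.+1]addn1 => H1.
  apply: (phase_cd (t := 0) Hb _ I0 H1); lia.
have I2 := run_loopF (f := algo2_stage n b)
   (Inv := fun i R => resp R (PA n b i.-1)) (s := 2) _ I1 H2.
have {I2} I2 : resp R (PA n b (2 + (n - 1)).-1).
  apply: I2 => i Hi Qa Ra Qb Rb /= HI Hrun.
  have [t Et] : exists t, i = t.+1 by exists i.-1; lia.
  subst i; move: HI Hrun => /= HI.
  rewrite /algo2_stage.
  have Eif : (if (t.+1 < n)%N then [seq (t.+1, j, t.+1) | j <- iota t.+2 (minn n (b + t.+1) - t.+1)]
     else [::]) = [seq (t.+1, j, t.+1) | j <- iota t.+2 (minn n (b + t.+1) - t.+1)].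
    case: ifP => // h; have -> : (minn n (b + t.+1) - t.+1 = 0)%N by lia.
    by [].
  rewrite Eif /=; case=> Qm [Rm [Hs /run_cat [Qx [Rx [Hl Hc]]]]].
  apply: (phase_cd Hb _ _ Hc); first lia.
  apply: (phase_ab (Q := Qa) (R := Ra) Hb _ HI); first lia.
  simpl; exists Qm, Rm; split => //; exact: Hl.
have E : (2 + (n - 1)).-1 = n by lia.
rewrite E in I2.
move=> r c Hr; case: (ltnP r (n+n)) => h3; last by rewrite mxe_out ?h3.
case: (ltnP c n) => hc; last by rewrite mxe_out ?hc ?orbT.
apply: I2; rewrite /PA /pat; case: ifP => h1; first lia.
case: ifP => h2; lia.
Qed.

End Alg.

Lemma key_alg (F : fieldType) n (A : 'M[F]_n) (Q : 'M[F]_(n + n)) (R : 'M[F]_(n + n, n)) :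
  A^T = A -> Q *m R = col_mx A 1%:M -> Q^T *m Q = 1%:M -> dsubmx R = 0 ->
  block_mx A (- 1%:M) 1%:M A *m
  block_mx (ulsubmx Q *m (dlsubmx Q)^T) (dlsubmx Q *m (dlsubmx Q)^T)
           (- (dlsubmx Q *m (dlsubmx Q)^T)) (ulsubmx Q *m (dlsubmx Q)^T) = 1%:M.
Proof.
move=> AT QR QQ DR.
set Q1 := ulsubmx Q; set Q2 := dlsubmx Q; set Q3 := ursubmx Q; set Q4 := drsubmx Q.
set R1 := usubmx R.
have ER : R = col_mx R1 0 by rewrite -DR vsubmxK.
have EQ : Q = block_mx Q1 Q3 Q2 Q4 by rewrite submxK.
move: QR; rewrite ER EQ mul_block_col !mulmx0 !addr0 => /eq_col_mx [H1 H2].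
move: QQ; rewrite EQ tr_block_mx mulmx_block (scalar_mx_block n n 1).
case/eq_block_mx => O1 _ _ _.
have H2' : R1 *m Q2 = 1%:M by apply: mulmx1C.
have EQ1 : Q1 = A *m Q2 by rewrite -H1 -mulmxA H2' mulmx1.
set Y := Q2 *m Q2^T.
have HY : Y *m (A *m A + 1%:M) = 1%:M.
  have -> : A *m A + 1%:M = R1^T *m R1.
    have E : R1^T *m R1 = R1^T *m (Q1^T *m Q1 + Q2^T *m Q2) *m R1 by rewrite O1 mulmx1.
    have T1 : R1^T *m Q1^T *m Q1 *m R1 = A^T *m A by rewrite -H1 trmx_mul !mulmxA.
    have T2 : R1^T *m Q2^T *m Q2 *m R1 = (1%:M)^T *m (1%:M : 'M[F]_n)
      by rewrite -H2 trmx_mul !mulmxA.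
    by rewrite E mulmxDr mulmxDl !mulmxA T1 T2 trmx1 mulmx1 AT.
  rewrite /Y -!mulmxA (mulmxA Q2^T) -trmx_mul H2' trmx1 mul1mx.
  done.
have HY' : (A *m A + 1%:M) *m Y = 1%:M by apply: mulmx1C.
have EX : Q1 *m Q2^T = A *m Y by rewrite EQ1 -mulmxA.
rewrite EX.
have ul : A *m (A *m Y) + - 1%:M *m - Y = 1%:M
  by rewrite mulNmx mulmxN opprK mul1mx mulmxA -HY' mulmxDl mul1mx.
have ur : A *m Y + - 1%:M *m (A *m Y) = 0 by rewrite mulNmx mul1mx addrN.
have dl : 1%:M *m (A *m Y) + A *m - Y = 0 by rewrite mul1mx mulmxN addrN.
have dr : 1%:M *m Y + A *m (A *m Y) = 1%:M
  by rewrite mul1mx mulmxA -HY' mulmxDl mul1mx addrC.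
by rewrite mulmx_block ul ur dl dr -scalar_mx_block.
Qed.

Section Rk.
Variable F : fieldType.

Lemma sum_inj m r (h : 'I_r -> 'I_m) (G : 'I_m -> F) a : injective h ->
  \sum_l (h l == a)%:R * G (h l) = if a \in codom h then G a else 0.
Proof.
move=> hinj; case: ifP => [/codomP [l0 ->]|Na].
  rewrite (bigD1 l0) //= eqxx mul1r big1 ?addr0 // => l Hl.
  by rewrite (inj_eq hinj) (negbTE Hl) mul0r.
rewrite big1 // => l _; case: eqP => [E|_]; last by rewrite mul0r.
by rewrite -E codom_f in Na.
Qed.

Lemma rank_rows m p r (M : 'M[F]_(m,p)) (h : 'I_r -> 'I_m) : injective h ->
  (forall i j, i \notin codom h -> M i j = 0) -> (\rank M <= r)%N.
Proof.
move=> hinj HM.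
have -> : M = (mxsub h id 1%:M)^T *m (mxsub h id M).
  apply/matrixP => i j; rewrite !mxE.
  under eq_bigr do rewrite !mxE.
  rewrite (sum_inj (fun x => M x j)) //; case: ifP => // /negbT /HM ->; done.
by apply: leq_trans (mxrankM_maxl _ _) (rank_leq_col _).
Qed.

Lemma rank_mxsub m n m' n' (f : 'I_m' -> 'I_m) (g : 'I_n' -> 'I_n) (M : 'M[F]_(m,n)) :
  (\rank (mxsub f g M) <= \rank M)%N.
Proof.
rewrite mxsubrc rowsubE.
apply: leq_trans (mxrankM_maxr _ _) _.
have -> : mxsub id g M = M *m mxsub id g 1%:M.
  by rewrite -[in LHS](mulmx1 M) mxsub_mul mxsub_id.
exact: mxrankM_maxl.
Qed.

Lemma rank_inv_blk N p q (Nm M : 'M[F]_N) (E1 : 'M_(p,N)) (E2 : 'M_(q,N)) :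
  Nm *m M = 1%:M -> E1^T *m E1 + E2^T *m E2 = 1%:M -> E1 *m E1^T = 1%:M ->
  E1 *m E2^T = 0 ->
  (\rank (E1 *m M *m E2^T) <= \rank (E1 *m Nm *m E2^T))%N.
Proof.
move=> NM Hs H11 H12.
set N12 := E1 *m Nm *m E2^T; set N11 := E1 *m Nm *m E1^T.
set M12 := E1 *m M *m E2^T; set M11 := E1 *m M *m E1^T.
have expand : forall k (X : 'M[F]_(N, k)),
    E1 *m Nm *m (E1^T *m E1 + E2^T *m E2) *m M *m X =
    N11 *m (E1 *m M *m X) + N12 *m (E2 *m M *m X).
  move=> k X; rewrite mulmxDr mulmxDl mulmxDl /N11 /N12 !mulmxA //.
have simpl1 : forall k (X : 'M[F]_(N, k)),
    E1 *m Nm *m (E1^T *m E1 + E2^T *m E2) *m M *m X = E1 *m X.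
  by move=> k X; rewrite Hs mulmx1 -(mulmxA E1) NM mulmx1.
have key1 : N11 *m M12 + N12 *m (E2 *m M *m E2^T) = 0.
  have := expand _ E2^T; rewrite simpl1 H12 => <-.
  by [].
have key2 : N11 *m M11 + N12 *m (E2 *m M *m E1^T) = 1%:M.
  have := expand _ E1^T; rewrite simpl1 H11 => <-.
  by [].
set K := kermx N12.
have KN : K *m N12 = 0 by exact: mulmx_ker.
have HK1 : (K *m N11) *m M12 = 0.
  have : K *m (N11 *m M12 + N12 *m (E2 *m M *m E2^T)) = 0 by rewrite key1 mulmx0.
  by rewrite mulmxDr mulmxA (mulmxA K N12) KN mul0mx addr0 mulmxA.
have HK2 : (K *m N11) *m M11 = K.
  have : K *m (N11 *m M11 + N12 *m (E2 *m M *m E1^T)) = K by rewrite key2 mulmx1.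
  by rewrite mulmxDr mulmxA (mulmxA K N12) KN mul0mx addr0 mulmxA.
have S : (K *m N11 <= kermx M12)%MS by apply/sub_kermxP.
have R1 := mxrankS S.
have R2 : (\rank K <= \rank (K *m N11))%N by rewrite -{1}HK2 mxrankM_maxl.
move: R1 R2; rewrite !mxrank_ker => R1 R2.
have := rank_leq_row N12; have := rank_leq_row M12; lia.
Qed.

End Rk.

Section Rk.
Variable F : fieldType.
Lemma rank_sub_inv N p q (Nm M : 'M[F]_N) (f : 'I_p -> 'I_N) (g : 'I_q -> 'I_N) :
  Nm *m M = 1%:M -> injective f -> injective g ->
  (forall a, (a \in codom f) = (a \notin codom g)) ->
  (\rank (mxsub f g M) <= \rank (mxsub f g Nm))%N.
Proof.
move=> NM finj ginj Hc.
set E1 := mxsub f id (1%:M : 'M[F]_N); set E2 := mxsub g id (1%:M : 'M[F]_N).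
have Esub : forall X : 'M[F]_N, mxsub f g X = E1 *m X *m E2^T.
  have E2T : E2^T = mxsub id g (1%:M : 'M[F]_N).
    by apply/matrixP => i j; rewrite !mxE eq_sym.
  move=> X; rewrite mxsubrc rowsubE E2T -[X in mxsub id g X](mulmx1 X).
  by rewrite mxsub_mul mxsub_id mulmxA.
rewrite !Esub; apply: rank_inv_blk => //.
- apply/matrixP => a c; rewrite /E1 /E2 !mxE.
  rewrite (eq_bigr (fun l => (f l == a)%:R * (fun x => (x == c)%:R) (f l)));
    last by move=> l _; rewrite !mxE.
  rewrite (eq_bigr (fun l => (g l == a)%:R * (fun x => (x == c)%:R) (g l)));
    last by move=> l _; rewrite !mxE.
  rewrite (sum_inj (fun x => (x == c)%:R)) // (sum_inj (fun x => (x == c)%:R)) //.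
  by rewrite Hc; case: (a \in codom g) => /=; rewrite ?add0r ?addr0.
- apply/matrixP => i j; rewrite /E1 /E2 !mxE.
  under eq_bigr do rewrite !mxE.
  rewrite (bigD1 (f j)) //= eqxx mulr1 big1 ?addr0.
    by rewrite (inj_eq finj).
  by move=> k Hk; rewrite [f j == k]eq_sym (negbTE Hk) mulr0.
- apply/matrixP => i j; rewrite /E1 /E2 !mxE.
  under eq_bigr do rewrite !mxE.
  rewrite big1 // => k _.
  case: (eqVneq (f i) k) => [E|]; last by rewrite mul0r.
  case: (eqVneq (g j) k) => [E'|]; last by rewrite mulr0.
  have : f i \in codom f by rewrite codom_f.
  by rewrite Hc E -E' codom_f.
Qed.
End Rk.

Ltac ifs_lia := repeat (case: ifP => ?); lia.

Lemma mxe_rowmx (F : nmodType) m n1 n2 (A : 'M[F]_(m, n1)) (B : 'M[F]_(m, n2)) r c :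
  mxe (row_mx A B) r c = if (c < n1)%N then mxe A r c else mxe B r (c - n1).
Proof.
case: (ltnP r m) => hr; last by rewrite !mxe_out ?hr //; case: ifP.
case: (ltnP c (n1 + n2)) => hc; last first.
  rewrite mxe_out ?hc ?orbT //; case: ifP => h; first lia.
  by rewrite mxe_out //; apply/orP; right; lia.
case: ifP => h.
  rewrite (mxe_in _ hr hc) (mxe_in _ hr h).
  have -> : Ordinal hc = lshift n2 (Ordinal h) by apply: val_inj.
  by rewrite row_mxEl.
have h' : (c - n1 < n2)%N by lia.
rewrite (mxe_in _ hr hc) (mxe_in _ hr h').
have -> : Ordinal hc = rshift n1 (Ordinal h') by apply: val_inj => /=; lia.
by rewrite row_mxEr.
Qed.

Lemma mxe_block (F : nmodType) m1 m2 n1 n2 (A : 'M[F]_(m1, n1)) (B : 'M[F]_(m1, n2))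
  (C : 'M[F]_(m2, n1)) (D : 'M[F]_(m2, n2)) r c :
  mxe (block_mx A B C D) r c =
  if (r < m1)%N then (if (c < n1)%N then mxe A r c else mxe B r (c - n1))
  else (if (c < n1)%N then mxe C (r - m1) c else mxe D (r - m1) (c - n1)).
Proof. by rewrite /block_mx mxe_colmx !mxe_rowmx. Qed.

Lemma mxe_opp (F : zmodType) m n (M : 'M[F]_(m, n)) r c : mxe (- M) r c = - mxe M r c.
Proof.
case: (ltnP r m) => hr; last by rewrite !mxe_out ?hr ?oppr0.
case: (ltnP c n) => hc; last by rewrite !mxe_out ?hc ?orbT ?oppr0.
by rewrite !(mxe_in _ hr hc) mxE.
Qed.

Lemma mxe1_0 (F : pzRingType) n r c : r != c -> mxe (1%:M : 'M[F]_n) r c = 0.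
Proof. by move=> H; rewrite mxe1 (negbTE H). Qed.

Section Sel.
Variables n k : nat.
Hypothesis Hk : (k < n)%N.

Lemma f1_lt (i : 'I_(k + k)) : ((if (i < k)%N then (i : nat) else n + (i - k)) < n + n)%N.
Proof. have := ltn_ord i; ifs_lia. Qed.
Definition f1 (i : 'I_(k + k)) : 'I_(n + n) := Ordinal (f1_lt i).

Lemma g1_lt (i : 'I_((n - k) + (n - k))) :
  ((if (i < n - k)%N then k + i else n + k + (i - (n - k))) < n + n)%N.
Proof. have := ltn_ord i; ifs_lia. Qed.
Definition g1 (i : 'I_((n - k) + (n - k))) : 'I_(n + n) := Ordinal (g1_lt i).

Lemma f1_inj : injective f1.
Proof.
move=> x y E; apply: val_inj; move: E => /(congr1 val) /=.
have := ltn_ord x; have := ltn_ord y; ifs_lia.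
Qed.

Lemma g1_inj : injective g1.
Proof.
move=> x y E; apply: val_inj; move: E => /(congr1 val) /=.
have := ltn_ord x; have := ltn_ord y; ifs_lia.
Qed.

Lemma codom_f1 (a : 'I_(n + n)) :
  (a \in codom f1) = ((a < k)%N || ((n <= a)%N && (a < n + k)%N)).
Proof.
apply/codomP/idP => [[x ->]| H]; first by rewrite /f1 /g1 /=; have := ltn_ord x; ifs_lia.
have hx : ((if (a < k)%N then (a : nat) else a - n + k) < k + k)%N by ifs_lia.
exists (Ordinal hx); apply: val_inj; rewrite /f1 /g1 /=; case: (ltnP a k) => h; ifs_lia.
Qed.

Lemma codom_g1 (a : 'I_(n + n)) :
  (a \in codom g1) = (((k <= a)%N && (a < n)%N) || (n + k <= a)%N).
Proof.
apply/codomP/idP => [[x ->]| H]; first by rewrite /f1 /g1 /=; have := ltn_ord x; ifs_lia.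
have hx : ((if (a < n)%N then (a : nat) - k else a - n - k + (n - k)) < (n - k) + (n - k))%N.
  have := ltn_ord a; ifs_lia.
exists (Ordinal hx); apply: val_inj; rewrite /f1 /g1 /=; have := ltn_ord a; case: (ltnP a n) => h; ifs_lia.
Qed.

Lemma codom_fg (a : 'I_(n + n)) : (a \in codom f1) = (a \notin codom g1).
Proof. rewrite codom_f1 codom_g1; have := ltn_ord a; lia. Qed.

Lemma codom_gf (a : 'I_(n + n)) : (a \in codom g1) = (a \notin codom f1).
Proof. rewrite codom_f1 codom_g1; have := ltn_ord a; lia. Qed.
End Sel.

Section Rows.
Variables m s b : nat.
Hypothesis Hsb : (s + b <= m)%N.

Lemma h_lt (l : 'I_(b + b)) :
  ((if (l < b)%N then s + l else m + s + (l - b)) < m + m)%N.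
Proof. have := ltn_ord l; ifs_lia. Qed.
Definition hgen (l : 'I_(b + b)) : 'I_(m + m) := Ordinal (h_lt l).

Lemma hgen_inj : injective hgen.
Proof.
move=> x y E; apply: val_inj; move: E => /(congr1 val) /=.
have := ltn_ord x; have := ltn_ord y; ifs_lia.
Qed.

Lemma hgen_notin (i : 'I_(m + m)) : i \notin codom hgen ->
  ~~ (((s <= i) && (i < s + b)) || ((m + s <= i) && (i < m + s + b)))%N.
Proof.
apply: contra => H; apply/codomP.
have hx : ((if (i < m)%N then (i : nat) - s else i - m - s + b) < b + b)%N.
  case: (ltnP i m) => h; lia.
exists (Ordinal hx); apply: val_inj; rewrite /hgen /=.
case: (ltnP i m) => h; ifs_lia.
Qed.
End Rows.

Theorem theorem4p4 (F : rcfType) (n b : nat) (A : 'M[F]_n)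
    (Q : 'M[F]_(n + n)) (R : 'M[F]_(n + n, n)) :
  A^T = A -> has_bandwidth b A -> (1 < b)%N -> (b < n)%N ->
  algo2_output b A Q R ->
  let Q1 := ulsubmx Q in
  let Q2 := dlsubmx Q in
  forall k : nat, (1 <= k)%N -> (k < n)%N ->
    (\rank (subblock (Q1 *m Q2^T) 1 k k.+1 n) <= 2 * b)%N /\
    (\rank (subblock (Q1 *m Q2^T) k.+1 n 1 k) <= 2 * b)%N.
Proof.
move=> AT HA Hb Hbn Halg Q1 Q2 k hk1 hk2.
have [QR0 QQ0] := run_facts Halg.
have QR : Q *m R = col_mx A 1%:M by rewrite QR0 mul1mx.
have QQ : Q^T *m Q = 1%:M by apply: QQ0; rewrite trmx1 mulmx1.
have DR : dsubmx R = 0.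
  apply/matrixP => i j; rewrite !mxE -(mxe_ord R) (algo2_bottom HA Hb Hbn Halg) //=.
  exact: leq_addr.
have NW := key_alg AT QR QQ DR.
rewrite -/Q1 -/Q2 in NW.
set X := Q1 *m Q2^T in NW *.
set Y := Q2 *m Q2^T in NW.
set W := block_mx X Y (- Y) X in NW.
set Nm := block_mx A (- 1%:M) 1%:M A in NW.
have EW : W = block_mx X Y (- Y) X by [].
have EN : Nm = block_mx A (- 1%:M) 1%:M A by [].
clearbody W Nm.
have Hf0 : forall i : 'I_(k - 1 + 1), (i < k + k)%N by move=> i; have := ltn_ord i; lia.
pose f0 := fun i : 'I_(k - 1 + 1) => Ordinal (Hf0 i).
have Hg0 : forall j : 'I_(n - k.+1 + 1), (j < (n - k) + (n - k))%N.
  by move=> j; have := ltn_ord j; lia.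
pose g0 := fun j : 'I_(n - k.+1 + 1) => Ordinal (Hg0 j).
split.
- case: (leqP k (2 * b)) => Hk1.
    by apply: leq_trans (rank_leq_row _) _; lia.
  case: (leqP (n - k) (2 * b)) => Hk2.
    by apply: leq_trans (rank_leq_col _) _; lia.
  have E : subblock X 1 k k.+1 n = mxsub f0 g0 (mxsub (f1 hk2) (g1 hk2) W).
    apply/matrixP => i j; rewrite /subblock !mxE -(mxe_ord W) /f1 /g1 /f0 /g0 /=.
    have hi : (i < k)%N by have := ltn_ord i; lia.
    have hj : (j < n - k)%N by have := ltn_ord j; lia.
    rewrite hi hj EW mxe_block ifT; last lia.
    rewrite ifT; last lia.
    by f_equal; lia.
  rewrite E; apply: leq_trans (rank_mxsub _ _ _) _.
  apply: leq_trans (rank_sub_inv NW (f1_inj (Hk:=hk2)) (g1_inj (Hk:=hk2)) (codom_fg hk2)) _.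
  have Hsb : (k - b + b <= k)%N by lia.
  apply: leq_trans (rank_rows (hgen_inj (Hsb:=Hsb)) _) _; last lia.
  move=> i j /hgen_notin Hi; rewrite mxE -(mxe_ord Nm) /f1 /g1 /= EN mxe_block.
  have := ltn_ord i; have := ltn_ord j => Hj Hi'.
  case: (ltnP i k) => hi; case: (ltnP j (n - k)) => hj.
  + rewrite ifT; last lia. rewrite ifT; last lia.
    rewrite (band_mxe HA) //; lia.
  + rewrite ifT; last lia. rewrite ifF; last lia.
    rewrite mxe_opp mxe1_0 ?oppr0 //; lia.
  + rewrite ifF; last lia. rewrite ifT; last lia.
    rewrite mxe1_0 //; lia.
  + rewrite ifF; last lia. rewrite ifF; last lia.
    rewrite (band_mxe HA) //; lia.
- case: (leqP k (2 * b)) => Hk1.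
    by apply: leq_trans (rank_leq_col _) _; lia.
  case: (leqP (n - k) (2 * b)) => Hk2.
    by apply: leq_trans (rank_leq_row _) _; lia.
  have E : subblock X k.+1 n 1 k = mxsub g0 f0 (mxsub (g1 hk2) (f1 hk2) W).
    apply/matrixP => i j; rewrite /subblock !mxE -(mxe_ord W) /f1 /g1 /f0 /g0 /=.
    have hj : (j < k)%N by have := ltn_ord j; lia.
    have hi : (i < n - k)%N by have := ltn_ord i; lia.
    rewrite hi hj EW mxe_block ifT; last lia.
    rewrite ifT; last lia.
    by f_equal; lia.
  rewrite E; apply: leq_trans (rank_mxsub _ _ _) _.
  apply: leq_trans (rank_sub_inv NW (g1_inj (Hk:=hk2)) (f1_inj (Hk:=hk2)) (codom_gf hk2)) _.
  have Hsb : (0 + b <= n - k)%N by lia.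
  apply: leq_trans (rank_rows (hgen_inj (Hsb:=Hsb)) _) _; last lia.
  move=> i j /hgen_notin Hi; rewrite mxE -(mxe_ord Nm) /f1 /g1 /= EN mxe_block.
  have := ltn_ord i; have := ltn_ord j => Hj Hi'.
  case: (ltnP i (n - k)) => hi; case: (ltnP j k) => hj.
  + rewrite ifT; last lia. rewrite ifT; last lia.
    rewrite (band_mxe HA) //; lia.
  + rewrite ifT; last lia. rewrite ifF; last lia.
    rewrite mxe_opp mxe1_0 ?oppr0 //; lia.
  + rewrite ifF; last lia. rewrite ifT; last lia.
    rewrite mxe1_0 //; lia.
  + rewrite ifF; last lia. rewrite ifF; last lia.
    rewrite (band_mxe HA) //; lia.
Qed.
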